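(* Let $q\in(0,1)$ and $b>0$, and let $(s_n)_{n\ge0}$ be a sequence of positive numbers together with an infinite set $B=\{n_1<n_2<\dots\}$ of nonnegative integers (the bad subscripts) such that $s_{n+1}=qs_n$ for $n\notin B$ and $s_{n+1}\le 2qs_n+b$ for $n\in B$. Suppose $n_{i+1}-n_i\to\infty$ as $i\to\infty$. Then $s_{n_i}\to0$ as $i\to\infty$. *)

(* Defs.v *)
From Stdlib Require Export Reals.
Open Scope R_scope.

(* The set of bad subscripts B = {nb 0 < nb 1 < ...}, given by a strictly
   increasing enumeration nb : nat -> nat. *)
Definition in_B (nb : nat -> nat) (k : nat) : Prop := exists i, nb i = k.

(* Main.v *)
Require Import Defs.
From Stdlib Require Import Reals Lra Lia.
Open Scope R_scope.

Lemma pw_le1 (q : R) n : 0 <= q <= 1 -> q ^ n <= 1.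
Proof. intros H; induction n; simpl; [lra|]. 
  assert (0 <= q ^ n) by (apply pow_le; lra). nra. Qed.

Lemma mono (nb : nat -> nat) (hinc : forall i, (nb i < nb (S i))%nat) :
  forall i j, (i < j)%nat -> (nb i < nb j)%nat.
Proof. intros i j H; induction H. apply hinc. specialize (hinc m); lia. Qed.

Lemma step (q b : R) (s : nat -> R) (nb : nat -> nat)
  (hq : 0 < q < 1)
  (hinc : forall i, (nb i < nb (S i))%nat)
  (hgood : forall n, ~ in_B nb n -> s (S n) = q * s n) i :
  forall m, (nb i + 1 + m <= nb (S i))%nat -> s (nb i + 1 + m)%nat = q ^ m * s (nb i + 1)%nat.
Proof.
  induction m; intros H. simpl. replace (nb i + 1 + 0)%nat with (nb i + 1)%nat by lia. lra.
  replace (nb i + 1 + S m)%nat with (S (nb i + 1 + m)) by lia.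
  rewrite hgood. rewrite IHm by lia. simpl; lra.
  intros [j Hj].
  destruct (Nat.lt_ge_cases i j).
  - destruct (Nat.lt_ge_cases j (S i)). lia.
    destruct (Nat.eq_dec j (S i)). subst; lia.
    pose proof (mono nb hinc (S i) j ltac:(lia)); lia.
  - destruct (Nat.eq_dec i j). subst; lia.
    pose proof (mono nb hinc j i ltac:(lia)); lia.
Qed.

Theorem lemma6p1 (q b : R) (s : nat -> R) (nb : nat -> nat)
  (hq : 0 < q < 1) (hb : 0 < b)
  (hs : forall n, 0 < s n)
  (hinc : forall i, (nb i < nb (S i))%nat)
  (hgood : forall n, ~ in_B nb n -> s (S n) = q * s n)
  (hbad : forall n, in_B nb n -> s (S n) <= 2 * q * s n + b)
  (hgap : forall M : nat, exists I : nat, forall i, (I <= i)%nat ->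
            (M <= nb (S i) - nb i)%nat) :
  Un_cv (fun i => s (nb i)) 0.
Proof.
  intros eps Heps.
  assert (Hy : 0 < Rmin (1/4) (eps / (4 * b))).
  { apply Rmin_pos; [lra|]. apply Rdiv_lt_0_compat; lra. }
  destruct (pow_lt_1_zero q ltac:(rewrite Rabs_right; lra) _ Hy) as [M HM].
  specialize (HM M (le_n M)). rewrite Rabs_right in HM by (apply Rle_ge, pow_le; lra).
  assert (HM1 : q ^ M < 1/4) by (eapply Rlt_le_trans; [exact HM| apply Rmin_l]).
  assert (HM2 : q ^ M < eps / (4 * b)) by (eapply Rlt_le_trans; [exact HM| apply Rmin_r]).
  assert (HM3 : q ^ M * b < eps / 4).
  { apply (Rmult_lt_compat_r b) in HM2; [|lra].
    replace (eps / (4 * b) * b) with (eps/4) in HM2 by (field; lra). lra. }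
  destruct (hgap (S M)) as [I HI].
  assert (Hrec : forall i, (I <= i)%nat -> s (nb (S i)) <= s (nb i) / 2 + eps / 4).
  { intros i Hi. specialize (HI i Hi).
    set (g := (nb (S i) - nb i - 1)%nat).
    assert (E : s (nb (S i)) = q ^ g * s (nb i + 1)%nat).
    { pose proof (step q b s nb hq hinc hgood i g ltac:(unfold g; lia)) as E.
      replace (nb i + 1 + g)%nat with (nb (S i)) in E by (unfold g; pose proof (hinc i); lia).
      exact E. }
    assert (Hg : q ^ g <= q ^ M).
    { replace g with (M + (g - M))%nat by (unfold g; lia). rewrite pow_add.
      pose proof (pw_le1 q (g - M) ltac:(lra)). pose proof (pow_le q M ltac:(lra)).
      pose proof (pow_le q (g - M) ltac:(lra)). nra. }
    assert (Hb : s (nb i + 1)%nat <= 2 * q * s (nb i) + b).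
    { replace (nb i + 1)%nat with (S (nb i)) by lia. apply hbad. exists i; auto. }
    pose proof (hs (nb i)). pose proof (hs (nb i + 1)%nat). pose proof (pow_le q g ltac:(lra)).
    pose proof (pow_le q M ltac:(lra)).
    rewrite E.
    assert (q ^ g * s (nb i + 1)%nat <= q ^ M * (2 * q * s (nb i) + b)).
    { apply Rle_trans with (q ^ M * s (nb i + 1)%nat). nra. nra. }
    assert (q ^ M * q * s (nb i) <= q ^ M * s (nb i)).
    { apply Rmult_le_compat_r; [lra|]. rewrite <- (Rmult_1_r (q ^ M)) at 2.
      apply Rmult_le_compat_l; lra. }
    assert (q ^ M * s (nb i) <= 1/4 * s (nb i)) by (apply Rmult_le_compat_r; lra).
    lra. }
  assert (Hk : forall k, s (nb (I + k)%nat) <= s (nb I) * (1/2) ^ k + eps / 2).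
  { induction k. simpl. replace (I + 0)%nat with I by lia. lra.
    replace (I + S k)%nat with (S (I + k)) by lia.
    pose proof (Hrec (I + k)%nat ltac:(lia)). simpl. lra. }
  assert (Hz : 0 < eps / 2 / s (nb I)) by (apply Rdiv_lt_0_compat; [lra| apply hs]).
  destruct (pow_lt_1_zero (1/2) ltac:(rewrite Rabs_right; lra) _ Hz) as [K HK].
  exists (I + K)%nat. intros n Hn.
  replace n with (I + (n - I))%nat by lia.
  specialize (HK (n - I)%nat ltac:(lia)).
  rewrite Rabs_right in HK by (apply Rle_ge, pow_le; lra).
  pose proof (hs (nb I)).
  assert (s (nb I) * (1/2) ^ (n - I) < eps / 2).
  { apply (Rmult_lt_compat_l (s (nb I))) in HK; [|lra].
    replace (s (nb I) * (eps / 2 / s (nb I))) with (eps/2) in HK by (field; lra). lra. }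
  pose proof (Hk (n - I)%nat). pose proof (hs (nb (I + (n - I)))%nat).
  unfold R_dist. rewrite Rminus_0_r, Rabs_right by lra. lra.
Qed.
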